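(* Fix $1\le p<2$. There is a constant $\alpha_p>0$ depending only on $p$ such that the following holds. Let $n\ge3$, let $X_1,\dots,X_n$ be (possibly dependent) random variables each with distribution $\mathcal{D}_p$, and let $\gamma_1,\dots,\gamma_n>0$ with $\gamma=\sum_i\gamma_i$. Then for every $t\ge1$, $$\Pr\Big[\sum_{i=1}^n\gamma_i|X_i|^p>\alpha_p\gamma t\Big]\le\frac{2\log(nt)}{t}.$$
   Context: $\log$ is the natural logarithm. $\mathcal{D}_p$ denotes the standard symmetric $p$-stable distribution: if $Y_1,\dots,Y_m$ are i.i.d. $\sim\mathcal{D}_p$ and $a\in\mathbb{R}^m$, then $\sum_ia_iY_i$ has the same distribution as $(\sum_i|a_i|^p)^{1/p}Y$ with $Y\sim\mathcal{D}_p$; $\mathcal{D}_1$ is the standard Cauchy distribution. Only the marginal distributions of the $X_i$ are assumed. *)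

(* Defs.v *)
From HB Require Import structures.
From mathcomp Require Import all_boot all_order all_algebra.
From mathcomp Require Import all_classical all_reals all_analysis.
Set Implicit Arguments. Unset Strict Implicit. Unset Printing Implicit Defensive.
Import Order.TTheory GRing.Theory Num.Theory.
Local Open Scope ring_scope.
Local Open Scope classical_set_scope.

(* The real random variable X (on the probability space P) has the standard
   symmetric p-stable distribution D_p, i.e. its characteristic function is
   E[exp(i u X)] = exp(-|u|^p) for all real u; written out with real and
   imaginary parts: E[cos(uX)] = exp(-|u|^p) and E[sin(uX)] = 0.
   For p = 1 this is the standard Cauchy distribution. *)
Definition has_std_stable_law (R : realType) (d : measure_display)
  (T : measurableType d) (P : probability T R) (p : R) (X : T -> R) : Prop :=
  forall u : R,
    (\int[P]_w (cos (u * X w))%:E = (expR (- (`|u| `^ p)))%:E)%E /\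
    (\int[P]_w (sin (u * X w))%:E = 0%E)%E.

(* Main.v *)
Require Import Defs.
From HB Require Import structures.
From mathcomp Require Import all_boot all_order all_algebra.
From mathcomp Require Import all_classical all_reals all_analysis.
From mathcomp Require Import ring lra.
From mathcomp Require Import measurable_realfun.
Import Order.TTheory GRing.Theory Num.Theory.
Import numFieldNormedType.Exports.
Local Open Scope ring_scope.
Local Open Scope classical_set_scope.
Lemma sin_lb (R : realType) (y : R) : 0 <= y <= 1 -> cos 1 * y <= sin y.
Proof.
move=> /andP[y0 y1].
have [] := @MVT_segment R sin cos 0 y y0.
- exact/continuous_subspaceT/continuous_sin.
move=> c cI E.
have /andP[c0 cy] : 0 <= c <= y by move: cI; rewrite in_itv.
move: E; rewrite sin0 !subr0 => ->.
apply: ler_wpM2r => //.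
have c1 : c <= 1 by apply: le_trans cy y1.
have pi1 : (1:R) <= pi by apply: le_trans (pi_ge2 R); rewrite ler1n.
move: c1; rewrite le_eqVlt => /predU1P[->//|c1].
apply: ltW; rewrite ltr_cos // in_itv /= ?c0 ?ler01 ?pi1 //.
by rewrite (le_trans (ltW c1)).
Qed.

Lemma dirichlet (R : realType) (th : R) (N : nat) :
  2 * sin (th / 2) * \sum_(j < N) cos (j.+1%:R * th)
  = sin ((N%:R + 2^-1) * th) - sin (th / 2).
Proof.
have L (a : R) : 2 * sin (th / 2) * cos ((a + 1) * th)
    = sin ((a + 1 + 2^-1) * th) - sin ((a + 2^-1) * th).
  have -> : (a + 1 + 2^-1) * th = (a + 1) * th + th / 2 by field.
  have -> : (a + 2^-1) * th = (a + 1) * th - th / 2 by field.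
  by rewrite sinD sinB; ring.
rewrite mulr_sumr.
pose f (k : nat) := sin ((k%:R + 2^-1) * th).
transitivity (\sum_(j < N) (f j.+1 - f j)).
  by apply: eq_bigr => j _; rewrite /f -[(j.+1)%:R]natr1 L.
rewrite -(big_mkord (fun _ => true) (fun j => f j.+1 - f j)) telescope_sumr //.
by rewrite /f add0r (mulrC (2^-1) th).
Qed.

Lemma cos_sum_le (R : realType) (th : R) (N : nat) :
  0 < sin (th / 2) -> 2 <= N%:R * sin (th / 2) ->
  \sum_(j < N) cos (j.+1%:R * th) <= N%:R / 2.
Proof.
move=> s0 Ns.
have D := @dirichlet R th N.
set S := \sum_(j < N) _ in D *.
set s := sin (th / 2) in D s0 Ns.
have h1 : 2 * s * S <= 2.
  rewrite D; have := sin_le1 ((N%:R + 2^-1) * th); have := sin_geN1 (th / 2).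
  lra.
nra.
Qed.

Lemma avg_lb (R : realType) (x K a : R) (N : nat) :
  0 < x -> x <= a <= K ->
  (4 / (cos 1 * x)) * K / 2 <= N%:R ->
  N%:R / 2 <= \sum_(j < N) (1 - cos (j.+1%:R * ((4 / (cos 1 * x)) / N%:R) * a)).
Proof.
move=> x0 /andP[xa aK] NK.
have c10 : 0 < cos 1 :> R := cos1_gt0 R.
set u := 4 / (cos 1 * x) in NK *.
have u0 : 0 < u by rewrite /u divr_gt0 // mulr_gt0.
have a0 : 0 < a by apply: lt_le_trans xa.
have K0 : 0 < K by apply: lt_le_trans aK.
have N0 : 0 < N%:R :> R.
  apply: lt_le_trans NK; have := mulr_gt0 u0 K0; lra.
rewrite big_split /= sumrN sumr_const card_ord.
have -> : \sum_(j < N) cos (j.+1%:R * (u / N%:R) * a)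
    = \sum_(j < N) cos (j.+1%:R * (u / N%:R * a)).
  by apply: eq_bigr => j _; rewrite !mulrA.
set th := u / N%:R * a.
have th0 : 0 < th := mulr_gt0 (divr_gt0 u0 N0) a0.
have y0 : 0 <= th / 2 by apply/ltW/divr_gt0.
have y1 : th / 2 <= 1.
  have -> : th / 2 = (u * a / 2) / N%:R by rewrite /th; field; rewrite gt_eqF.
  rewrite ler_pdivrMr // mul1r; apply: le_trans NK.
  have : u * a <= u * K by rewrite ler_pM2l.
  lra.
have slb : cos 1 * (th / 2) <= sin (th / 2) by apply: sin_lb; rewrite y0 y1.
have Hs : 2 <= N%:R * sin (th / 2).
  apply: le_trans (_ : N%:R * (cos 1 * (th / 2)) <= _); last first.
    by rewrite ler_pM2l.
  have -> : N%:R * (cos 1 * (th / 2)) = 2 * (a / x).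
    rewrite /th /u; field.
    by rewrite !gt_eqF //.
  by rewrite ler_pMr // ler_pdivlMr // mul1r.
have s0 : 0 < sin (th / 2).
  apply: lt_le_trans slb; apply: mulr_gt0 => //; exact: divr_gt0.
have := @cos_sum_le R th N s0 Hs.

lra.
Qed.

Lemma indic_ge0' {R : realType} {U : Type} (A : set U) (w : U) : 0 <= (\1_A w : R).
Proof. by rewrite indicE ler0n. Qed.

Section Expect.
Context {R : realType} {d : measure_display} {T : measurableType d}
  (P : probability T R).

Definition HasE (f : T -> R) (r : R) :=
  [/\ measurable_fun setT f, (forall w, 0 <= f w) &
      (\int[P]_w (f w)%:E <= r%:E)%E].

Lemma HasE_add f g r1 r2 : HasE f r1 -> HasE g r2 ->
  HasE (fun w => f w + g w) (r1 + r2).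
Proof.
move=> [mf f0 If] [mg g0 Ig]; split.
- exact: measurable_funD.
- by move=> w; rewrite addr_ge0.
- under eq_integral do rewrite EFinD.
  rewrite ge0_integralD //.
  + by rewrite EFinD leeD.
  + by move=> w _; rewrite lee_fin.
  + exact/measurable_EFinP.
  + by move=> w _; rewrite lee_fin.
  + exact/measurable_EFinP.
Qed.

Lemma HasE_sum (m : nat) (f : 'I_m -> T -> R) (r : 'I_m -> R) :
  (forall j, HasE (f j) (r j)) ->
  HasE (fun w => \sum_(j < m) f j w) (\sum_(j < m) r j).
Proof.
elim: m f r => [|m IH] f r H.
  split.
  - by under eq_fun do rewrite big_ord0; exact: measurable_cst.
  - by move=> w; rewrite big_ord0.
  - under eq_integral do rewrite big_ord0.
    by rewrite big_ord0 integral0.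
have H1 := IH (fun j => f (lift ord0 j)) (fun j => r (lift ord0 j))
  (fun j => H (lift ord0 j)).
have H2 := @HasE_add _ _ _ _ (H ord0) H1.
move: H2 => [m2 p2 I2]; split.
- by under eq_fun do rewrite big_ord_recl.
- by move=> w; rewrite big_ord_recl.
- under eq_integral do rewrite big_ord_recl.
  by rewrite big_ord_recl.
Qed.

Lemma HasE_scale c f r : 0 <= c -> HasE f r -> HasE (fun w => c * f w) (c * r).
Proof.
move=> c0 [mf f0 If]; split.
- exact: measurable_funM.
- by move=> w; rewrite mulr_ge0.
- under eq_integral do rewrite EFinM.
  rewrite ge0_integralZl_EFin //.
  + by rewrite EFinM; apply: lee_wpmul2l => //; rewrite lee_fin.
  + by move=> w _; rewrite lee_fin.
  + exact/measurable_EFinP.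
Qed.

Lemma HasE_indic (A : set T) r : measurable A -> (P A <= r%:E)%E ->
  HasE (\1_A) r.
Proof.
move=> mA PA; split.
- exact: measurable_indic.
- by move=> w; rewrite indic_ge0'.
- by rewrite integral_indic // setIT.
Qed.

Lemma HasE_cst c : 0 <= c -> HasE (fun _ => c) c.
Proof.
move=> c0; split.
- exact: measurable_cst.
- by [].
- rewrite integral_cst // -[X in (_ <= X)%E]mule1; apply: lee_wpmul2l; [by rewrite lee_fin | exact: probability_le1].
Qed.

Lemma HasE_markov f r (A : set T) c : HasE f r -> measurable A -> 0 < c ->
  (forall w, A w -> c <= f w) -> (P A <= (r / c)%:E)%E.
Proof.
move=> [mf f0 If] mA c0 Af.
have mi : measurable_fun setT (fun w => (c * \1_A w)%:E).
  by apply/measurable_EFinP; apply: measurable_funM => //; exact: measurable_indic.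
have mfe : measurable_fun setT (fun w => (f w)%:E) by exact/measurable_EFinP.
have : (\int[P]_w ((c * \1_A w)%:E) <= \int[P]_w (f w)%:E)%E.
  apply: ge0_le_integral => //.
  - by move=> w _; rewrite lee_fin mulr_ge0 // ?indic_ge0' // ltW.
  move=> w _; rewrite lee_fin indicE.
  case: (pselect (A w)) => Aw.
    by rewrite mem_set // mulr1 Af.
  by rewrite memNset // mulr0 f0.
move=> H.
have E : (\int[P]_w ((c * \1_A w)%:E) = c%:E * P A)%E.
  under eq_integral do rewrite EFinM.
  rewrite ge0_integralZl_EFin //.
  - by rewrite integral_indic // setIT.
  all: try (by move=> w _; rewrite lee_fin indic_ge0').
  all: try exact: ltW.
  apply/measurable_EFinP; exact: measurable_indic.
rewrite E in H.
have := le_trans H If.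
have PAf : P A = (fine (P A))%:E by rewrite fineK // fin_num_measure.
rewrite PAf -EFinM !lee_fin => H2.
by rewrite ler_pdivlMr // mulrC.
Qed.

End Expect.

Lemma HasE_le {R : realType} {d : measure_display} {T : measurableType d}
  (P : probability T R) f r r' : HasE P f r -> r <= r' -> HasE P f r'.
Proof.
by move=> [mf f0 If] rr; split => //; apply: le_trans If _; rewrite lee_fin.
Qed.

Section Tail.
Context {R : realType} {d : measure_display} {T : measurableType d}
  (P : probability T R) (p : R) (X : T -> R).
Hypothesis mX : measurable_fun setT X.
Hypothesis hl : @has_std_stable_law R d T P p X.
Hypothesis p0 : 0 < p.

Lemma cos_term (v : R) :
  HasE P (fun w => 1 - cos (v * X w)) (1 - expR (- (`|v| `^ p))).
Proof.
have mc : measurable_fun setT (fun w => cos (v * X w)).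
  apply: (measurableT_comp (f := cos) (g := fun w => v * X w)).
    apply: continuous_measurable_fun; exact: continuous_cos.
  by apply: measurable_funM => //; exact: measurable_cst.
split.
- by apply: measurable_funB => //; exact: measurable_cst.
- by move=> w; rewrite subr_ge0 cos_le1.
- under eq_integral do rewrite EFinB.
  rewrite integralB_EFin //.
  + rewrite (hl v).1 integral_cst // mul1e EFinB leeB //.
    exact: probability_le1.
  + exact: finite_measure_integrable_cst.
  + apply: measurable_bounded_integrable => //.
      by rewrite (le_lt_trans (probability_le1 P measurableT)) // ltry.
    exists 1; split => // M M1 y _.
    by rewrite /= (le_trans (cos_max _)) // ltW.
Qed.

End Tail.

Lemma mset_itv {R : realType} {d : measure_display} {T : measurableType d}
  (g : T -> R) (mg : measurable_fun setT g) (i : interval R) :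
  measurable [set w | g w \in i].
Proof. by have := mg measurableT _ (measurable_itv i); rewrite setTI. Qed.

Section Tail2.
Context {R : realType} {d : measure_display} {T : measurableType d}
  (P : probability T R) (p : R) (X : T -> R).
Hypothesis mX : measurable_fun setT X.
Hypothesis hl : @has_std_stable_law R d T P p X.
Hypothesis p0 : 0 < p.

Lemma tail_bounded (x : R) (k : nat) : 0 < x ->
  (P [set w | (`|X w| \in `]x, k%:R])%R] <= (2 * (4 / (cos 1 * x)) `^ p)%:E)%E.
Proof.
move=> x0.
have c10 : 0 < cos 1 :> R := cos1_gt0 R.
set u := 4 / (cos 1 * x).
have u0 : 0 < u by rewrite /u divr_gt0 // mulr_gt0.
pose N := (Num.truncn (u * k%:R / 2)).+1.
have NK : u * k%:R / 2 <= N%:R by apply/ltW/truncnS_gt.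
have N0 : 0 < N%:R :> R by rewrite ltr0n.
pose h := u / N%:R.
have h0 : 0 < h by rewrite divr_gt0.
pose f w := \sum_(j < N) (1 - cos (j.+1%:R * h * X w)).
have HE : HasE P f (\sum_(j < N) u `^ p).
  apply: HasE_sum => j.
  apply: HasE_le (@cos_term R d T P p X mX hl _) _.
  set v := j.+1%:R * h.
  have v0 : 0 <= v by rewrite mulr_ge0 // ltW.
  have vu : v <= u.
    rewrite /v /h mulrA ler_pdivrMr // mulrC ler_pM2l // ler_nat.
    exact: ltn_ord.
  have := expR_ge1Dx (- (`|v| `^ p)).
  have : `|v| `^ p <= u `^ p.
    apply: ge0_ler_powR; first exact: ltW.
    - by rewrite nnegrE.
    - by rewrite nnegrE ltW.
    - by rewrite ger0_norm.
  lra.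
have mn : measurable_fun setT (fun w => `|X w|).
  exact: measurableT_comp.
have mA := @mset_itv R d T (fun w => `|X w|) mn (`]x, k%:R]%R).
have H := @HasE_markov R d T P f _ _ (N%:R / 2) HE mA (divr_gt0 N0 (ltr0n _ 2)).
apply: le_trans (H _) _.
- move=> w /=; rewrite in_itv /= => /andP[xw wk].
  have := @avg_lb R x k%:R `|X w| N x0 _ NK.
  rewrite ltW //= wk => /(_ isT).
  move/le_trans; apply; rewrite -/u -/h /f.
  apply: ler_sum => j _.
  rewrite -[in X in _ <= X]cos_norm normrM [`|_ * h|]ger0_norm //.
  by rewrite mulr_ge0 // ltW.
- rewrite sumr_const card_ord lee_fin -[u `^ p *+ N]mulr_natl.
  have -> : N%:R * u `^ p / (N%:R / 2) = 2 * u `^ p.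
    by field; rewrite gt_eqF.
  by [].
Qed.

End Tail2.

Section Tail3.
Context {R : realType} {d : measure_display} {T : measurableType d}
  (P : probability T R) (p : R) (X : T -> R).
Hypothesis mX : measurable_fun setT X.
Hypothesis hl : @has_std_stable_law R d T P p X.
Hypothesis p0 : 0 < p.

Lemma tail_ub (x : R) : 0 < x ->
  (P [set w | (x < `|X w|)%R] <= (2 * (4 / (cos 1 * x)) `^ p)%:E)%E.
Proof.
move=> x0.
pose F (k : nat) := [set w | (`|X w| \in `]x, k%:R])%R].
have mn : measurable_fun setT (fun w => `|X w|) by exact: measurableT_comp.
have mF k : measurable (F k) := @mset_itv R d T (fun w => `|X w|) mn (`]x, k%:R]%R).
have UF : \bigcup_k F k = [set w | x < `|X w|].
  apply/seteqP; split => w /=.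
    by move=> [k _] /=; rewrite /F /= in_itv /= => /andP[].
  move=> xw; exists (Num.truncn `|X w|).+1 => //.
  by rewrite /F /= in_itv /= xw /= ltW // truncnS_gt.
have ndF : nondecreasing_seq F.
  move=> i j ij; apply/subsetPset => w; rewrite /F /= !in_itv /= => /andP[-> wi] /=.
  by apply: le_trans wi _; rewrite ler_nat.
have := @nondecreasing_cvg_mu _ _ _ P F mF _ ndF.
have mU : measurable [set w | (x < `|X w|)%R].
  rewrite (_ : [set w | (x < `|X w|)%R] = [set w | (`|X w| \in `]x, +oo[)%R]).
    exact: (@mset_itv R d T (fun w => `|X w|) mn (`]x, +oo[%R)).
  by apply/seteqP; split => w /=; rewrite in_itv /= andbT.
rewrite UF => /(_ mU) H.
have H2 : (fun k => (2 * (4 / (cos 1 * x)) `^ p)%:E) @ \oo --> (2 * (4 / (cos 1 * x)) `^ p)%:E.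
  exact: cvg_cst.
apply: (lee_cvg_to H H2).
by apply: nearW => k; exact: (@tail_bounded R d T P p X mX hl p0 x k x0).
Qed.

Definition Cst : R := 2 * (4 / cos 1) `^ p.

Lemma Cst_gt0 : 0 < Cst.
Proof. by rewrite /Cst mulr_gt0 // powR_gt0 // divr_gt0 // cos1_gt0. Qed.

Lemma tail_pow (s : R) : 0 < s ->
  (P [set w | (s < `|X w| `^ p)%R] <= (Cst / s)%:E)%E.
Proof.
move=> s0.
set x := s `^ p^-1.
have x0 : 0 < x by rewrite powR_gt0.
have xp : x `^ p = s.
  by rewrite /x -powRrM mulVf ?gt_eqF // powRr1 // ltW.
have -> : [set w | s < `|X w| `^ p] = [set w | x < `|X w|].
  apply/seteqP; split => w /=.
    move=> H; rewrite ltNge; apply/negP => Hle.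
    have : `|X w| `^ p <= x `^ p.
      apply: ge0_ler_powR => //; first exact: ltW.
      by rewrite nnegrE ltW.
    by rewrite xp leNgt H.
  move=> H; rewrite -xp; apply: gt0_ltr_powR => //.
  by rewrite nnegrE ltW.
apply: le_trans (tail_ub x x0) _.
rewrite lee_fin /Cst -mulrA ler_pM2l //.
have -> : 4 / (cos 1 * x) = (4 / cos 1) * x^-1 by rewrite invfM mulrA.
have c10 : 0 < cos 1 :> R := cos1_gt0 R.
rewrite powRM ?ler_pM2l //; last 2 first.
- by rewrite ltW // divr_gt0.
- by rewrite invr_ge0 ltW.
have : x `^ p * x^-1 `^ p = 1.
  by rewrite -powRM ?ltW ?invr_gt0 // mulfV ?gt_eqF // powR1.
rewrite xp => E.
have -> : x^-1 `^ p = s^-1.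
  by rewrite -[x^-1 `^ p]mul1r -(@mulVf _ s (lt0r_neq0 s0)) -mulrA E mulr1.
  by [].
by rewrite powR_gt0 // divr_gt0.
Qed.

End Tail3.

Lemma dyadic {R : realType} (y : R) (m : nat) (ind : nat -> R) :
  (forall k, 0 <= ind k) -> (forall k, expR k%:R < y -> ind k = 1) ->
  y <= expR m%:R -> y <= 1 + \sum_(k < m) expR k.+1%:R * ind k.
Proof.
move=> i0 i1; elim: m => [|m IH] ym.
  by rewrite big_ord0 addr0 -(expR0 R).
rewrite big_ord_recr /=.
have t0 : 0 <= expR m.+1%:R * ind m by rewrite mulr_ge0 // ltW // expR_gt0.
have s0 : 0 <= \sum_(k < m) expR k.+1%:R * ind k.
  by apply: sumr_ge0 => k _; rewrite mulr_ge0 // ltW // expR_gt0.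
case: (lerP y (expR m%:R)) => H.
  have := IH H; lra.
rewrite i1 // mulr1; lra.
Qed.

Lemma indic_set {R : realType} {U : Type} (Q : U -> Prop) (w : U) :
  Q w -> (\1_[set v | Q v] w : R) = 1.
Proof. by move=> Qw; rewrite indicE mem_set. Qed.

Lemma arith_mle {R : realType} (L K0 a b : R) :
  a <= L -> b <= K0 -> a + 1 + (b + 1) <= L + K0 + 2.
Proof. lra. Qed.

Lemma arith_i1 {R : realType} (n t C l0 bm c : R) :
  0 < n -> 0 < t -> 0 < C -> 0 < l0 -> 0 < c -> 0 < bm ->
  n * t * (C / l0) <= bm -> n * (c * (C / bm)) <= l0 / t * c.
Proof.
move=> n0 t0 C0 l00 c0 bm0 H.
have H2 : n * C * t <= l0 * bm.
  have E : n * C * t = l0 * (n * t * (C / l0)) by field; rewrite gt_eqF.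
  by rewrite E ler_pM2l.
have -> : n * (c * (C / bm)) = c * (n * C / bm) by ring.
rewrite [l0 / t * c]mulrC ler_pM2l // ler_pdivrMr // mulrAC ler_pdivlMr //.
Qed.

Lemma arith_i2 {R : realType} (x K0 L l0 m : R) :
  0 < l0 -> l0 <= L -> 0 < x -> 0 <= K0 -> 0 <= m -> m <= L + K0 + 2 ->
  1 + m * x <= L * (1 / l0 + x * (2 + K0) / l0 + x + 1).
Proof.
move=> l00 Ll0 x0 K00 m0 mle.
set Q := L / l0.
have Q1 : 1 <= Q by rewrite /Q ler_pdivlMr // mul1r.
have LaE : L * (1 / l0 + x * (2 + K0) / l0 + x + 1) = Q + x * (2 + K0) * Q + x * L + L.
  by rewrite /Q; field; rewrite gt_eqF.
have h1 : x * (2 + K0) <= x * (2 + K0) * Q.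
  apply: ler_peMr => //; apply: mulr_ge0; [exact: ltW | lra].
have h2 : m * x <= (L + K0 + 2) * x by rewrite ler_pM2r.
rewrite LaE.
have L0 : 0 <= L by apply: le_trans Ll0; exact: ltW.
have E2 : (L + K0 + 2) * x = x * (2 + K0) + x * L by ring.
rewrite E2 in h2.
lra.
Qed.

Theorem mainTheorem13 (R : realType) (p : R) :
  1 <= p -> p < 2 ->
  exists alpha : R, 0 < alpha /\
    forall (d : measure_display) (T : measurableType d) (P : probability T R)
      (n : nat) (X : 'I_n -> {RV P >-> R}) (g : 'I_n -> R) (t : R),
      (3 <= n)%N ->
      (forall i, has_std_stable_law P p (X i)) ->
      (forall i, 0 < g i) ->
      1 <= t ->
      (P [set w | (alpha * (\sum_(i < n) g i) * t
                    < \sum_(i < n) g i * (`|X i w| `^ p))%R]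
        <= ((2 * ln (n%:R * t)) / t)%:E)%E.
Proof.
move=> p1 p2.
have p0 : 0 < p by apply: lt_le_trans p1.
set C := Cst p.
have C0 : 0 < C := Cst_gt0 p.
set l0 := ln (3 : R).
have l00 : 0 < l0 by apply: ln_gt0; rewrite ltr1n.
set K0 := C / l0.
have K00 : 0 < K0 by rewrite divr_gt0.
pose j0 := (Num.truncn K0).+1.
set e := expR (1 : R).
have e0 : 0 < e := expR_gt0 1.
pose alpha := 1 / l0 + e * C * (2 + K0) / l0 + e * C + 1.
have eC0 : 0 < e * C by rewrite mulr_gt0.
have a1 : 0 <= 1 / l0 by rewrite divr_ge0 // ltW.
have a2 : 0 <= e * C * (2 + K0) / l0.
  by rewrite divr_ge0 ?ltW // mulr_gt0 // addr_gt0.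
have alpha0 : 0 < alpha by rewrite /alpha; lra.
exists alpha; split => // d T P n X g t n3 hl g0 t1.
set gam := \sum_(i < n) g i.
have gam0 : 0 < gam.
  have i0 : 'I_n := Ordinal (leq_trans (isT : (0 < 3)%N) n3).
  rewrite /gam (bigD1 i0) //=; apply: lt_le_trans (g0 i0) _.
  rewrite lerDl; apply: sumr_ge0 => i _; exact: ltW.
have t0 : 0 < t by apply: lt_le_trans t1.
have nR3 : 3 <= n%:R :> R by rewrite ler_nat.
have nt3 : 3 <= n%:R * t by nra.
set L := ln (n%:R * t).
have Ll0 : l0 <= L by rewrite /l0 /L ler_ln // posrE; lra.
have L0 : 0 < L by apply: lt_le_trans Ll0.
pose m := ((Num.truncn L).+1 + j0)%N.
pose b (k : nat) := expR (k%:R : R).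
have b0 k : 0 < b k := expR_gt0 _.
have mX i : measurable_fun setT (X i) by exact: measurable_funPT.
have mY i : measurable_fun setT (fun w => `|X i w| `^ p).
  apply: (measurableT_comp (measurable_powR p)).
  exact: measurableT_comp.
pose B i k := [set w | (b k < `|X i w| `^ p)%R].
have mB i k : measurable (B i k).
  rewrite (_ : B i k = [set w | (`|X i w| `^ p \in `]b k, +oo[)%R]).
    exact: (@mset_itv R d T (fun w => `|X i w| `^ p) (mY i) (`]b k, +oo[%R)).
  by apply/seteqP; split => w /=; rewrite in_itv /= andbT.
have PB i k : (P (B i k) <= (C / b k)%:E)%E.
  exact: (@tail_pow R d T P p (X i) (mX i) (hl i) p0 (b k) (b0 k)).
set c := alpha * gam * t.
have c0 : 0 < c by rewrite /c !mulr_gt0.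
pose f w := \sum_(i < n) (c * \1_(B i m) w
   + (g i + \sum_(k < m) (g i * b k.+1) * \1_(B i k) w)).
pose r := \sum_(i < n) (c * (C / b m)
   + (g i + \sum_(k < m) (g i * b k.+1) * (C / b k))).
have HE : HasE P f r.
  apply: HasE_sum => i; apply: HasE_add.
    exact: (@HasE_scale R d T P c _ _ (ltW c0) (@HasE_indic R d T P _ _ (mB i m) (PB i m))).
  apply: HasE_add; first exact: (@HasE_cst R d T P _ (ltW (g0 i))).
  apply: HasE_sum => k.
  apply: (@HasE_scale R d T P _ _ _ _ (@HasE_indic R d T P _ _ (mB i k) (PB i k))).
  by rewrite mulr_ge0 // ltW.
have mS : measurable_fun setT (fun w => \sum_(i < n) g i * (`|X i w| `^ p)).
  apply: measurable_sum => i; apply: measurable_funM => //.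
pose E := [set w | (c < \sum_(i < n) g i * (`|X i w| `^ p))%R].
have mE : measurable E.
  rewrite (_ : E = [set w | (\sum_(i < n) g i * (`|X i w| `^ p) \in `]c, +oo[)%R]).
    exact: (@mset_itv R d T _ mS (`]c, +oo[%R)).
  by apply/seteqP; split => w /=; rewrite in_itv /= andbT.
have H := @HasE_markov R d T P f r E c HE mE c0.
have Fnn i w : 0 <= c * \1_(B i m) w
   + (g i + \sum_(k < m) (g i * b k.+1) * \1_(B i k) w).
  apply: addr_ge0; first by rewrite mulr_ge0 ?indic_ge0' // ltW.
  apply: addr_ge0; first exact: ltW.
  apply: sumr_ge0 => k _; rewrite !mulr_ge0 ?indic_ge0' // ltW //.
apply: le_trans (H _) _.
  move=> w /= Hw.
  case: (pselect (exists i, b m < `|X i w| `^ p)).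
    move=> [i Hi]; rewrite /f (bigD1 i) //=.
    apply: le_trans (_ : c * \1_(B i m) w + (g i + \sum_(k < m) (g i * b k.+1) * \1_(B i k) w) <= _).
      rewrite indic_set // mulr1 lerDl.
      apply: addr_ge0; first exact: ltW.
      apply: sumr_ge0 => k _; rewrite !mulr_ge0 ?indic_ge0' // ltW //.
    rewrite lerDl; apply: sumr_ge0 => j _; exact: Fnn.
  move=> nH.
  have Hy i : `|X i w| `^ p <= b m.
    by rewrite leNgt; apply/negP => h; apply: nH; exists i.
  apply: le_trans (ltW Hw) _.
  rewrite /f; apply: ler_sum => i _.
  apply: le_trans (_ : g i + \sum_(k < m) (g i * b k.+1) * \1_(B i k) w <= _); last first.
    by rewrite lerDr mulr_ge0 ?indic_ge0' // ltW.
  have := @dyadic R (`|X i w| `^ p) m (fun k => \1_(B i k) w)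
    (fun k => indic_ge0' _ _) _ (Hy i).
  move=> /(_ _) Hd.
  have {}Hd := Hd (fun k hk => @indic_set R T _ w hk).
  have := ler_wpM2l (ltW (g0 i)) Hd.
  by rewrite mulrDr mulr1 mulr_sumr; under eq_bigr do rewrite mulrA.
rewrite lee_fin ler_pdivrMr //.
have bn0 k : b k != 0 by apply: lt0r_neq0.
have rE : r = n%:R * (c * (C / b m)) + gam * (1 + m%:R * (e * C)).
  rewrite /r big_split /= sumr_const card_ord -[_ *+ n]mulr_natl; congr (_ + _).
  rewrite /gam mulr_suml; apply: eq_bigr => i _.
  have bk k : g i * b k.+1 * (C / b k) = g i * (e * C).
    have -> : b k.+1 = b k * e by rewrite /b /e -addn1 natrD expRD.
    by field.
  under eq_bigr do rewrite bk.
  by rewrite sumr_const card_ord -[_ *+ m]mulr_natl; ring.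
have nt0 : 0 < n%:R * t by apply: lt_le_trans nt3.
have bm : n%:R * t * K0 <= b m.
  have h1 : L + j0%:R <= m%:R.
    rewrite /m natrD lerD2r; apply/ltW; exact: truncnS_gt.
  have h2 : K0 <= j0%:R by apply/ltW; exact: truncnS_gt.
  have h3 : expR (L + j0%:R) <= b m by rewrite /b ler_expR.
  apply: le_trans h3; rewrite expRD /L lnK ?posrE //.
  rewrite ler_pM2l //; apply: le_trans h2 _.
  apply: le_trans (expR_ge1Dx _); rewrite lerDr //.
have mle : m%:R <= L + K0 + 2.
  rewrite /m /j0 natrD -[(Num.truncn L).+1%:R]natr1 -[(Num.truncn K0).+1%:R]natr1.
  have := truncn_itv (ltW L0); have := truncn_itv (ltW K00).
  move=> /andP[h1 _] /andP[h2 _]; exact: arith_mle.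
have i1 : n%:R * (c * (C / b m)) <= l0 / t * c.
  by apply: arith_i1 => //; rewrite ltr0n; apply: leq_trans n3.
have i2 : 1 + m%:R * (e * C) <= L * alpha.
  by apply: arith_i2 => //; apply: ltW.
have i3 : gam * (1 + m%:R * (e * C)) <= L / t * c.
  have -> : L / t * c = gam * (L * alpha) by rewrite /c; field; rewrite gt_eqF.
  by rewrite ler_pM2l.
rewrite rE.
have -> : 2 * L / t * c = L / t * c + L / t * c by ring.
apply: lerD => //; apply: le_trans i1 _.
by rewrite ler_pM2r // ler_pM2r // invr_gt0.
Qed.
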